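(* Fix an integer $m\ge 1$, let $\xi=(\xi_1\ge\cdots\ge\xi_\ell>0)$ be a partition with $\xi_i\le m$ for all $i$, and let $\mu\in\mathbb Z_{\ge 0}$. Write $\mu=\mu_1 m+\mu_0$ with $0\le\mu_0<m$, and consider the formal power series \[ F(x)=F_{\xi,m,\mu}(x)=\frac{p_{m-\mu_0-1}(x)\,p_\xi(x)}{p_m(x)^{\mu_1+1}}=\sum_{r\ge 0}a_r x^r . \] Let $t:=\#\{i:\xi_i=m\}$. Then: (1) If $m=1$, then $F_{\xi,1,\mu}(x)=1$. (2) Assume $m\ge 2$. (a) If $t\ge \mu_1+1$, then $F_{\xi,m,\mu}(x)$ is a polynomial; in particular $a_r=0$ for all sufficiently large $r$. (b) If $t\le \mu_1$, then $a_r>0$ for all sufficiently large $r$.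
   Context: The polynomials $p_r(x)\in\mathbb Z[x]$ are defined by $p_0(x)=p_1(x)=1$ and $p_{r+1}(x)=p_r(x)-x\,p_{r-1}(x)$ for $r\ge 1$. For a partition $\xi=(\xi_1,\dots,\xi_\ell)$, $p_\xi(x):=\prod_{i=1}^\ell p_{\xi_i}(x)$. Since $p_m(0)=1$, the quotient is a well-defined formal power series in $x$. *)

(* Defs.v *)
From mathcomp Require Import all_boot all_order all_algebra.
Set Implicit Arguments. Unset Strict Implicit. Unset Printing Implicit Defensive.
Import GRing.Theory Num.Theory.
Local Open Scope ring_scope.

(* p_0 = p_1 = 1, p_{r+1} = p_r - x p_{r-1}; pp r = (p_r, p_{r+1}) *)
Fixpoint pp (r : nat) : {poly int} * {poly int} :=
  match r with
  | 0%N => (1, 1)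
  | r'.+1 => let: (a, b) := pp r' in (b, b - 'X * a)
  end.

Definition p (r : nat) : {poly int} := (pp r).1.

Definition p_part (xi : seq nat) : {poly int} := \prod_(k <- xi) p k.

(* r-th coefficient of the formal power series num/den, valid when den`_0 = 1:
   1/den = sum_{j>=0} (1 - den)^j, and (1-den)^j has no terms of degree < j,
   so only j <= r contribute to the r-th coefficient. *)
Definition fps_div_coef (num den : {poly int}) (r : nat) : int :=
  (num * \sum_(j < r.+1) (1 - den) ^+ j)`_r.

Definition F_coef (xi : seq nat) (m mu : nat) (r : nat) : int :=
  fps_div_coef (p (m - (mu %% m) - 1) * p_part xi) (p m ^+ (mu %/ m).+1) r.

(* Main.v *)
Require Import Defs.
From mathcomp Require Import all_boot all_order all_algebra.
Import GRing.Theory Num.Theory.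
Local Open Scope ring_scope.
From mathcomp Require Import zify ring.

Lemma ppS n : pp n.+1 = ((pp n).2, (pp n).2 - 'X * (pp n).1).
Proof. by rewrite /=; case: (pp n). Qed.

Lemma pSS n : p n.+2 = p n.+1 - 'X * p n.
Proof. by rewrite /p /=; case: (pp n). Qed.

Lemma p0 : p 0 = 1. Proof. by []. Qed.
Lemma p1 : p 1 = 1. Proof. by []. Qed.

Lemma p_coef0 n : (p n)`_0 = 1.
Proof.
suff: (p n)`_0 = 1 /\ (p n.+1)`_0 = 1 by case.
elim: n => [|n [_ IH]]; first by rewrite p0 p1 coefC.
by split=> //; rewrite pSS coefB coefXM /= IH subr0.
Qed.

Lemma size_p n : (size (p n) <= (n./2).+1)%N.
Proof.
suff: (size (p n) <= (n./2).+1)%N /\ (size (p n.+1) <= (n.+1)./2.+1)%N by case.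
elim: n => [|n [IH1 IH2]]; first by rewrite p0 p1 size_poly1.
split=> //; rewrite pSS.
apply: (leq_trans (size_add _ _)); rewrite geq_max size_opp; apply/andP; split.
  apply: (leq_trans IH2); rewrite ltnS half_leq //.
apply: (leq_trans (size_polyMleq _ _)); rewrite size_polyX /=.
by [].
Qed.

Definition conv {R : nzRingType} (P : {poly R}) (f : nat -> R) (n : nat) : R :=
  \sum_(i < n.+1) P`_i * f (n - i)%N.

Lemma conv_coef {R : nzRingType} (P Q : {poly R}) n :
  conv P (fun k => Q`_k) n = (P * Q)`_n.
Proof. by rewrite /conv coefM. Qed.

Lemma convE {R : nzRingType} (P : {poly R}) f {k n} : (k <= n)%N ->
  conv P f k = (P * \poly_(i < n.+1) f i)`_k.
Proof.
move=> kn; rewrite coefM /conv; apply: eq_bigr => i _; rewrite coef_poly.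
by rewrite ifT // ltnS (leq_trans (leq_subr _ _) kn).
Qed.

Lemma coefM_eq_upto {R : nzRingType} (P A B : {poly R}) n :
  (forall k, (k <= n)%N -> A`_k = B`_k) -> (P * A)`_n = (P * B)`_n.
Proof.
move=> h; rewrite !coefM; apply: eq_bigr => i _; rewrite h // leq_subr //.
Qed.

Lemma conv_mul {R : nzRingType} (P Q : {poly R}) f n :
  conv (P * Q) f n = conv P (conv Q f) n.
Proof.
rewrite (convE _ _ (leqnn n)) (convE _ _ (leqnn n)) -mulrA.
apply: coefM_eq_upto => k kn; rewrite coef_poly ltnS kn.
by rewrite (convE _ _ kn).
Qed.

Definition delta {R : nzRingType} (n : nat) : R := (n == 0)%:R.

Lemma conv_delta {R : nzRingType} (P : {poly R}) n : conv P delta n = P`_n.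
Proof.
rewrite /conv big_ord_recr /= subnn /delta /= mulr1 big1 ?add0r // => i _.
by rewrite subn_eq0 leqNgt ltn_ord mulr0.
Qed.


Lemma coef_X_pow (R : nzRingType) (a : {poly R}) j i :
  a`_0 = 0 -> (i < j)%N -> (a ^+ j)`_i = 0.
Proof.
move=> a0; elim: j i => [|j IH] i //.
rewrite exprS coefM => ij; apply: big1 => k _.
case: k => [[|k] hk] /=; first by rewrite a0 mul0r.
rewrite IH ?mulr0 //; lia.
Qed.

Lemma conv_uniq {R : nzRingType} (P : {poly R}) (f g : nat -> R) :
  P`_0 = 1 -> (forall n, conv P f n = conv P g n) -> forall n, f n = g n.
Proof.
move=> P0 h n; suff: forall k, (k <= n)%N -> f k = g k by apply.
elim: n => [|n IH] k.
  rewrite leqn0 => /eqP ->; have := h 0%N.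
  by rewrite /conv !big_ord_recl !big_ord0 P0 !mul1r !addr0.
rewrite leq_eqVlt => /orP [/eqP -> | ]; last by apply: IH.
have := h n.+1; rewrite /conv big_ord_recl [RHS]big_ord_recl P0 !mul1r !subn0.
set s1 := (X in _ + X); set s2 := (X in _ = _ + X).
suff -> : s1 = s2 by move/addIr.
rewrite /s1 /s2; apply: eq_bigr => i _; congr (_ * _); apply: IH.
by rewrite lift0 subSS leq_subr.
Qed.

Lemma coefM_pow0 (R : nzRingType) (num a : {poly R}) j k :
  a`_0 = 0 -> (k < j)%N -> (num * a ^+ j)`_k = 0.
Proof.
move=> a0 kj; rewrite coefM big1 // => i _.
rewrite coef_X_pow ?mulr0 //; lia.
Qed.

Lemma fps_stable (num den : {poly int}) k r : den`_0 = 1 -> (k <= r)%N ->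
  (num * \sum_(j < r.+1) (1 - den) ^+ j)`_k = fps_div_coef num den k.
Proof.
move=> d0 kr; rewrite /fps_div_coef -(subnKC kr).
have a0 : (1 - den)`_0 = 0 by rewrite coefB coefC d0 subrr.
elim: (r - k)%N => [|d IH]; first by rewrite addn0.
rewrite addnS big_ord_recr /= mulrDr coefD IH coefM_pow0 ?addr0 //; lia.
Qed.

Lemma fps_conv (num den : {poly int}) r : den`_0 = 1 ->
  conv den (fun k => fps_div_coef num den k) r = num`_r.
Proof.
move=> d0; set a := 1 - den.
have a0 : a`_0 = 0 by rewrite coefB coefC d0 subrr.
have -> : conv den (fun k => fps_div_coef num den k) r =
   (den * (num * \sum_(j < r.+1) a ^+ j))`_r.
  rewrite coefM; apply: eq_bigr => i _; rewrite fps_stable //; lia.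
have hd : den = 1 - a by rewrite /a opprB addrC subrK.
rewrite mulrCA [in X in num * X]hd.
have -> : (1 - a) * \sum_(j < r.+1) a ^+ j = 1 - a ^+ r.+1.
  by rewrite -opprB mulNr -subrX1 opprB.
by rewrite mulrBr mulr1 coefB coefM_pow0 ?subr0.
Qed.


Lemma conv_ext {R : nzRingType} (P : {poly R}) f g n :
  f =1 g -> conv P f n = conv P g n.
Proof. by move=> e; apply: eq_bigr => i _; rewrite e. Qed.

Lemma conv_lin0 {R : comNzRingType} (g : R) h : conv (1 - g%:P * 'X) h 0 = h 0.
Proof.
by rewrite /conv big_ord1 coefB coefC coefCM coefX /= mulr0 subr0 mul1r.
Qed.

Lemma conv_linS {R : comNzRingType} (g : R) h n :
  conv (1 - g%:P * 'X) h n.+1 = h n.+1 - g * h n.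
Proof.
rewrite /conv big_ord_recl big_ord_recl big1 ?addr0.
  rewrite !coefB !coefC !coefCM !coefX /= mulr0 subr0 mul1r sub0r mulr1 subSS subn0.
  by rewrite subn0 mulNr.
move=> i _; rewrite !lift0 coefB coefC coefCM coefX /=.
by rewrite mulr0 subrr mul0r.
Qed.

Lemma conv_map {R : nzRingType} (P : {poly int}) (f : nat -> int) n :
  conv (map_poly (intr : int -> R) P) (fun k => (f k)%:~R) n = (conv P f n)%:~R.
Proof.
rewrite /conv rmorph_sum; apply: eq_bigr => i _.
by rewrite coef_map /= rmorphM.
Qed.

Lemma coef0_pow (P : {poly int}) e : P`_0 = 1 -> (P ^+ e)`_0 = 1.
Proof. by move=> h; rewrite -horner_coef0 horner_exp horner_coef0 h expr1n. Qed.



Lemma p_part_split (xi : seq nat) (m : nat) :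
  Defs.p_part xi = p m ^+ count_mem m xi * Defs.p_part [seq k <- xi | k != m].
Proof.
rewrite /Defs.p_part; elim: xi => [|k xi IH]; first by rewrite !big_nil mulr1.
rewrite /= big_cons IH; case: eqP => [->|km] /=.
  by rewrite add1n exprS mulrA.
by rewrite add0n big_cons mulrCA.
Qed.

Lemma F_coef_eq (xi : seq nat) (m mu : nat) (Q : {poly int}) :
  p (m - mu %% m - 1) * Defs.p_part xi = p m ^+ (mu %/ m).+1 * Q ->
  forall r, F_coef xi m mu r = Q`_r.
Proof.
move=> e r; rewrite /F_coef.
apply: (@conv_uniq _ (p m ^+ (mu %/ m).+1)).
  by rewrite coef0_pow // p_coef0.
move=> n; rewrite fps_conv ?coef0_pow ?p_coef0 //.
by rewrite conv_coef e.
Qed.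

Lemma part_a (xi : seq nat) (m mu : nat) : (mu %/ m < count_mem m xi)%N ->
  exists N, forall r, (N <= r)%N -> F_coef xi m mu r = 0.
Proof.
move=> h.
set Q := p (m - mu %% m - 1) * p m ^+ (count_mem m xi - (mu %/ m).+1) *
         Defs.p_part [seq k <- xi | k != m].
exists (size Q) => r hr.
rewrite (@F_coef_eq xi m mu Q); first by rewrite nth_default.
rewrite (p_part_split xi m) /Q.
have -> : count_mem m xi = ((mu %/ m).+1 + (count_mem m xi - (mu %/ m).+1))%N by lia.
rewrite exprD addKn; ring.
Qed.

Lemma part_1 (xi : seq nat) (mu : nat) : all (fun k => (0 < k <= 1)%N) xi ->
  forall r, F_coef xi 1 mu r = (r == 0%N)%:R.
Proof.
move=> hxi r.
have hp : Defs.p_part xi = 1.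
  rewrite /Defs.p_part big_seq big1 // => k kxi.
  by have := allP hxi k kxi; case: k {kxi} => [|[|]] //.
rewrite (@F_coef_eq xi 1 mu 1).
  by rewrite coef1.
by rewrite hp modn1 /= p1 expr1n !mulr1.
Qed.


From mathcomp Require Import all_classical all_reals.
From mathcomp Require Import topology normedtype sequences trigo.
From mathcomp Require Import lra.
Import GRing.Theory Num.Theory Order.TTheory numFieldNormedType.Exports.

Section Trig.
Variable R : realType.

Definition Pr n : {poly R} := map_poly (intr : int -> R) (p n).

Lemma PrSS n : Pr n.+2 = Pr n.+1 - 'X * Pr n.
Proof. by rewrite /Pr pSS rmorphB rmorphM /= map_polyX. Qed.

Lemma Pr0 : Pr 0 = 1. Proof. by rewrite /Pr p0 rmorph1. Qed.
Lemma Pr1 : Pr 1 = 1. Proof. by rewrite /Pr p1 rmorph1. Qed.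

Lemma Ptrig (t : R) n : cos t != 0 ->
  (Pr n).[(4 * cos t ^+ 2)^-1] * (2 * cos t) ^+ n * sin t = sin (n.+1%:R * t).
Proof.
move=> c0; set x := (4 * cos t ^+ 2)^-1.
have hx : x * (2 * cos t) ^+ 2 = 1.
  have h4 : (4 : R) != 0 by rewrite pnatr_eq0.
  by rewrite /x exprMn -natrX mulVf // mulf_neq0 // expf_neq0.
suff: ((Pr n).[x] * (2 * cos t) ^+ n * sin t = sin (n.+1%:R * t)) /\
      (Pr n.+1).[x] * (2 * cos t) ^+ n.+1 * sin t = sin (n.+2%:R * t).
  by case.
elim: n => [|n [IH1 IH2]].
  rewrite Pr0 Pr1 hornerC !mul1r expr1; split=> //.
  have e : (2 : R) * t = t + t by rewrite mulr_natl mulr2n.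
  by rewrite e sinD; ring.
split=> //; rewrite PrSS (mulrC 'X) hornerD hornerN hornerMX.
set a := (Pr n.+1).[x]; set b := (Pr n).[x]; set c2 := 2 * cos t.

have -> : (a - b * x) * c2 ^+ n.+2 * sin t =
   c2 * (a * c2 ^+ n.+1 * sin t) - (x * c2 ^+ 2) * (b * c2 ^+ n * sin t).
  by rewrite !exprS; ring.
rewrite hx mul1r IH1 IH2.
have e1 : n.+3%:R * t = n.+2%:R * t + t.
  by rewrite -[n.+3]addn1 natrD mulrDl mul1r.
have e2 : n.+1%:R * t = n.+2%:R * t - t.
  by rewrite -[n.+2]addn1 natrD mulrDl mul1r addrK.
rewrite e1 e2 sinB sinD /c2; ring.
Qed.

Lemma sin_natpi k : sin (k%:R * pi) = 0 :> R.
Proof.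
elim: k => [|k IH]; first by rewrite mul0r sin0.
by rewrite -addn1 natrD mulrDl mul1r sinDpi IH oppr0.
Qed.

End Trig.

Set Implicit Arguments. Unset Strict Implicit.

Section Roots.
Variable R : realType.
Variable m : nat.

Definition theta k : R := k%:R * pi / m.+1%:R.
Definition gam k : R := 4 * cos (theta k) ^+ 2.

Lemma theta_bounds k : (0 < k)%N -> (k.*2 <= m)%N -> 0 < theta k /\ theta k < pi / 2.
Proof.
move=> k0 km; have pi0 : 0 < pi :> R := pi_gt0 R.
have m0 : 0 < m.+1%:R :> R by rewrite ltr0n.
split; first by rewrite /theta divr_gt0 // mulr_gt0 // ltr0n.
rewrite /theta ltr_pdivrMr //.
have h : 2 * k%:R + 1 <= m.+1%:R :> R.
  have h0 : (k.*2 + 1)%:R <= m.+1%:R :> R by rewrite ler_nat; lia.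
  by move: h0; rewrite natrD -muln2 natrM mulrC.
nra.
Qed.

Lemma theta_in k : (0 < k)%N -> (k.*2 <= m)%N -> theta k \in `[0, pi].
Proof.
move=> k0 km; have [h1 h2] := theta_bounds k0 km.
rewrite in_itv /= (ltW h1) /=; have := pi_gt0 R; lra.
Qed.

Lemma cos_theta_pos k : (0 < k)%N -> (k.*2 <= m)%N -> 0 < cos (theta k).
Proof.
move=> k0 km; have [h1 h2] := theta_bounds k0 km.
apply: cos_gt0_pihalf; have := pi_gt0 R; lra.
Qed.

Lemma sin_theta_pos k : (0 < k)%N -> (k.*2 <= m)%N -> 0 < sin (theta k).
Proof.
move=> k0 km; have [h1 h2] := theta_bounds k0 km.
apply: sin_gt0_pihalf; lra.
Qed.

Lemma gam_pos k : (0 < k)%N -> (k.*2 <= m)%N -> 0 < gam k.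
Proof. by move=> k0 km; rewrite /gam; apply: mulr_gt0; [rewrite ltr0n | apply: exprn_gt0; apply: cos_theta_pos]. Qed.

Lemma gam_le k : (0 < k)%N -> (k.*2 <= m)%N -> gam k <= gam 1.
Proof.
move=> k0 km; have m2 : (1.*2 <= m)%N by lia.
have c1 := cos_theta_pos (isT : (0 < 1)%N) m2.
have ck := cos_theta_pos k0 km.
rewrite /gam ler_pM2l ?ltr0n //.
rewrite (ler_pXn2r (isT : (0 < 2)%N)) ?nnegrE ?(ltW c1) ?(ltW ck) //.
rewrite leNgt ltr_cos ?theta_in // -leNgt /theta ler_pM2r ?invr_gt0 ?ltr0n //.
by rewrite ler_pM2r ?pi_gt0 // ler_nat.
Qed.

Lemma gam_inj i j : (0 < i)%N -> (i.*2 <= m)%N -> (0 < j)%N -> (j.*2 <= m)%N ->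
  gam i = gam j -> i = j.
Proof.
move=> i0 im j0 jm; rewrite /gam => /mulfI h.
have /h /eqP : (4 : R) != 0 by rewrite pnatr_eq0.
rewrite eqrXn2 ?ltW ?cos_theta_pos // => /eqP /cos_inj.
move=> /(_ (theta_in i0 im) (theta_in j0 jm)).
rewrite /theta => /mulIf h2.
have : (m.+1%:R : R)^-1 != 0 by rewrite invr_eq0 pnatr_eq0.
move=> /h2 /mulIf; have : (pi : R) != 0 by rewrite gt_eqF // pi_gt0.
by move=> hp /(_ hp) /eqP; rewrite eqr_nat => /eqP.
Qed.

Lemma Pr_root k : (0 < k)%N -> (k.*2 <= m)%N -> (Pr R m).[(gam k)^-1] = 0.
Proof.
move=> k0 km; have c0 := cos_theta_pos k0 km; have s0 := sin_theta_pos k0 km.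
have := @Ptrig R (theta k) m (lt0r_neq0 c0).
have -> : m.+1%:R * theta k = k%:R * pi.
  by rewrite /theta mulrC divfK // pnatr_eq0.
rewrite sin_natpi => /eqP; rewrite !mulf_eq0 (gt_eqF s0) expf_eq0.
rewrite mulf_eq0 (gt_eqF c0) pnatr_eq0 andbF !orbF /gam => /eqP //.
Qed.

Lemma Pr_pos j : (2 <= m)%N -> (j < m)%N -> 0 < (Pr R j).[(gam 1)^-1].
Proof.
move=> m2 jm; have m1 : (1.*2 <= m)%N by lia.
have c0 := cos_theta_pos (isT : (0 < 1)%N) m1.
have s0 := sin_theta_pos (isT : (0 < 1)%N) m1.
have := @Ptrig R (theta 1) j (lt0r_neq0 c0).
have hs : 0 < sin (j.+1%:R * theta 1).
  apply: sin_gt0_pi; rewrite /theta mul1r; apply/andP; split.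
    by rewrite mulr_gt0 ?divr_gt0 ?ltr0n ?pi_gt0.
  rewrite mulrA ltr_pdivrMr ?ltr0n // mulrC ltr_pM2l ?pi_gt0 // ltr_nat; lia.
rewrite /gam => e; move: hs; rewrite -e -mulrA pmulr_lgt0 //.
by rewrite mulr_gt0 // exprn_gt0 // mulr_gt0.
Qed.

Lemma size_prod_lin (s : seq R) :
  (size (\prod_(g <- s) (1 - g%:P * 'X))%R <= (size s).+1)%N.
Proof.
elim: s => [|g s IH]; first by rewrite big_nil size_poly1.
rewrite big_cons /=; apply: (leq_trans (size_polyMleq _ _)).
have h1 : (size (1 - g%:P * 'X)%R <= 2)%N.
  apply: (leq_trans (size_add _ _)); rewrite size_opp geq_max size_poly1 /=.
  apply: (leq_trans (size_polyMleq _ _)); rewrite size_polyX.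
  have := size_polyC_leq1 g; lia.
move: h1 IH; move: (size (1 - g%:P * 'X)%R) (size (\prod_(j <- s) (1 - j%:P * 'X))%R) => a b; lia.
Qed.

Lemma Pr_factor :
  Pr R m = \prod_(k <- iota 1 m./2) (1 - (gam k)%:P * 'X).
Proof.
set Pi := \prod_(k <- iota 1 m./2) _.
have hk : forall k, k \in iota 1 m./2 -> (0 < k)%N /\ (k.*2 <= m)%N.
  move=> k; rewrite mem_iota => /andP [h1 h2]; split=> //.
  apply: (@leq_trans (m./2).*2); first by rewrite leq_double; lia.
  by rewrite -{2}(odd_double_half m) leq_addl.
apply/eqP; rewrite -subr_eq0; apply/negPn/negP => Q0.
have := max_poly_roots Q0 (rs := 0 :: [seq (gam k)^-1 | k <- iota 1 m./2]).
have hs : (size (Pr R m - Pi)%R <= (m./2).+1)%N.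
  apply: (leq_trans (size_add _ _)); rewrite size_opp geq_max; apply/andP; split.
    by rewrite /Pr size_map_inj_poly ?size_p //; apply: intr_inj.
  by have := size_prod_lin [seq gam k | k <- iota 1 m./2]; rewrite big_map size_map size_iota.
have Pi0 : Pi.[0] = 1.
  by rewrite /Pi horner_prod big1 // => k _; rewrite !hornerE subr0.
have Pm0 : (Pr R m).[0] = 1.
  by rewrite horner_coef0 /Pr coef_map /= p_coef0.
have rt : all (root (Pr R m - Pi)) (0 :: [seq (gam k)^-1 | k <- iota 1 m./2]).
  rewrite /= rootE hornerD hornerN Pi0 Pm0 subrr eqxx /=.
  apply/allP => y /mapP [k kin ->]; have [k0 km] := hk k kin.
  rewrite rootE hornerD hornerN Pr_root // sub0r oppr_eq0 /Pi horner_prod.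
  rewrite prodf_seq_eq0; apply/hasP; exists k => //=.
  by rewrite !hornerE mulfV ?subrr // lt0r_neq0 // gam_pos.
have un : uniq (0 :: [seq (gam k)^-1 | k <- iota 1 m./2]).
  rewrite /= map_inj_in_uniq ?iota_uniq ?andbT.
    apply/mapP => -[k kin /esym/eqP]; have [k0 km] := hk k kin.
    by rewrite invr_eq0 (negbTE (lt0r_neq0 (gam_pos k0 km))).
  move=> i j iin jin /invr_inj; have [i0 im] := hk i iin; have [j0 jm] := hk j jin.
  by apply: gam_inj.
by move=> /(_ rt un); rewrite /= size_map size_iota ltnNge hs.
Qed.

End Roots.

Local Open Scope classical_set_scope.

Section Asym.
Variable R : realType.

Definition Good (G : nat -> R) :=
  (forall n, 1 <= G n) /\ (fun n => G n.+1 / G n) @ \oo --> (1 : R).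

Fixpoint Hs (G : nat -> R) (c : R) n :=
  if n is n'.+1 then G n + c * Hs G c n' else G 0.

Lemma Hs_good G c : 0 <= c <= 1 -> Good G -> Good (Hs G c).
Proof.
move=> /andP[c0 c1] [G1 Gr].
have H1 : forall n, 1 <= Hs G c n.
  elim=> [|n IH] /=; first exact: G1.
  have h1 := G1 n.+1.
  have h2 : 0 <= c * Hs G c n by rewrite mulr_ge0 // (le_trans _ IH).
  lra.
set H := Hs G c.
have Hpos : forall n, 0 < H n by move=> n; apply: lt_le_trans (H1 n).
split=> //; apply/cvgrPdist_le => e e0.
have e2 : 0 < e / 2 by rewrite divr_gt0.
move/cvgrPdist_le: Gr => /(_ (e/2) e2) [N _ hN].
have hG : forall j, (N <= j)%N -> `|G j.+1 - G j| <= e/2 * G j.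
  move=> j /hN /=; have Gj : 0 < G j by apply: lt_le_trans (G1 j).
  have -> : G j.+1 - G j = (G j.+1 / G j - 1) * G j.
    by rewrite mulrBl divfK ?mul1r // lt0r_neq0.
  by rewrite normrM (gtr0_norm Gj) distrC ler_pM2r.
set D := fun n => H n.+1 - H n.
have Drec : forall n, D n.+1 = (G n.+2 - G n.+1) + c * D n.
  by move=> n; rewrite /D /H /=; ring.
have C1 : forall k, `|D (N + k)%N| <= c ^+ k * `|D N| + e/2 * H (N + k)%N.
  elim=> [|k IH]; first by rewrite addn0 expr0 mul1r lerDl mulr_ge0 // ltW // Hpos.
  rewrite addnS Drec; apply: (le_trans (ler_normD _ _)).
  have h1 := hG (N + k).+1 (leq_trans (leq_addr k N) (leqnSn _)).
  have h2 : `|c * D (N + k)%N| <= c * (c ^+ k * `|D N| + e / 2 * H (N + k)%N).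
    by rewrite normrM (ger0_norm c0) ler_wpM2l.
  have -> : H (N + k).+1 = G (N + k).+1 + c * H (N + k)%N by [].
  rewrite exprS; lra.
have C2 : forall k, k.+1%:R * c ^+ k <= H (N + k)%N.
  elim=> [|k IH]; first by rewrite addn0 expr0 mulr1 H1.
  rewrite addnS; have -> : H (N + k).+1 = G (N + k).+1 + c * H (N + k)%N by [].
  have h1 := G1 (N + k).+1.
  have h2 : c ^+ k.+1 <= 1 by rewrite exprn_ile1.
  have h3 : c * (k.+1%:R * c ^+ k) <= c * H (N + k)%N by rewrite ler_wpM2l.
  move: h2; rewrite exprS => h2; rewrite -[k.+2]addn1 natrD; nra.
have [K _ hK] := nbhs_infty_ger (2 * `|D N| / e).
exists (N + K)%N => // n /= hn.
have [k nE] : exists k, n = (N + k)%N by exists (n - N)%N; lia.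
rewrite nE in hn *.
have hk : (K <= k)%N by lia.
have hk2 := hK k hk; rewrite /= in hk2.
have hDk := C1 k; have hHk := C2 k; have hpos := Hpos (N + k)%N.
have -> : 1 - H (N + k).+1 / H (N + k)%N = - (D (N + k)%N / H (N + k)%N).
  by rewrite /D mulrBl divff ?lt0r_neq0 // opprB.
rewrite normrN normrM normfV (gtr0_norm hpos) -/(_ / _) ler_pdivrMr //.
have ha : `|D N| <= e / 2 * k.+1%:R.
  move: hk2; rewrite ler_pdivrMr // -[k.+1]addn1 natrD => h; nra.
have hq : 0 <= c ^+ k by rewrite exprn_ge0.
have P1 : c ^+ k * `|D N| <= c ^+ k * (e / 2 * k.+1%:R) by rewrite ler_wpM2l.
have P2 : e / 2 * (k.+1%:R * c ^+ k) <= e / 2 * H (N + k)%N by rewrite ler_wpM2l // ltW.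
nra.
Qed.

Lemma ratio_shift G : Good G -> forall i, (fun n => G n / G (n + i)%N) @ \oo --> (1 : R).
Proof.
move=> [G1 Gr].
have Gn0 : forall n, G n != 0 by move=> n; rewrite lt0r_neq0 // (lt_le_trans _ (G1 n)).
have Ginv : (fun n => G n / G n.+1) @ \oo --> (1 : R).
  have E : (fun n => (G n.+1 / G n)^-1) =1 (fun n => G n / G n.+1).
    by move=> n; rewrite invf_div.
  rewrite -(eq_cvg _ _ E).
  have := cvgV (oner_neq0 R) Gr; rewrite invr1; apply; exact: _.
elim=> [|i IH].
  suff -> : (fun n => G n / G (n + 0)%N) = (fun=> 1) by apply: cvg_cst.
  by apply/funext => n; rewrite addn0 divff.
have Gs : (fun n => G (n + i)%N / G (n + i).+1) @ \oo --> (1 : R).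
  by move: Ginv; rewrite -(cvg_shiftn i).
have E : (fun n => G n / G (n + i)%N * (G (n + i)%N / G (n + i).+1)) =1
  (fun n => G n / G (n + i.+1)%N) by move=> n; rewrite addnS mulrA divfK.
rewrite -(eq_cvg _ _ E).
by have := cvgM IH Gs; rewrite mulr1; apply; exact: _.
Qed.

Lemma cvg_sum_nat (u : nat -> nat -> R) (l : nat -> R) L :
  (forall i, (i < L)%N -> u i @ \oo --> l i) ->
  (fun n => \sum_(i < L) u i n) @ \oo --> \sum_(i < L) l i.
Proof.
elim: L => [|L IH] h.
  rewrite big_ord0; suff -> : (fun n => \sum_(i < 0) u i n) = (fun=> 0) by apply: cvg_cst.
  by apply/funext => n; rewrite big_ord0.
rewrite big_ord_recr /=.
have E : (fun n => \sum_(i < L) u i n + u L n) =1 (fun n => \sum_(i < L.+1) u i n).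
  by move=> n; rewrite big_ord_recr.
rewrite -(eq_cvg _ _ E).
have := cvgD (IH (fun i iL => h i (ltnW iL))) (h L (ltnSn L)); apply; exact: _.
Qed.

Lemma eventually_pos G (b : R) (Q : {poly R}) : Good G -> 0 < b -> 0 < Q.[b^-1] ->
  exists N, forall n, (N <= n)%N ->
    0 < \sum_(i < n.+1) Q`_i * (b ^+ (n - i) * G (n - i)%N).
Proof.
move=> gG b0 Qp; have [G1 _] := gG.
have Gpos : forall n, 0 < G n by move=> n; apply: lt_le_trans (G1 n).
set L := size Q.
pose u i n := (Q`_i * b^-1 ^+ i) * (G (n + (L - i))%N / G (n + (L - i) + i)%N).
have cu : (fun n => \sum_(i < L) u i n) @ \oo --> \sum_(i < L) (Q`_i * b^-1 ^+ i).
  apply: (@cvg_sum_nat u (fun i => Q`_i * b^-1 ^+ i) L) => i iL.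
  have := ratio_shift gG i; rewrite -(cvg_shiftn (L - i)) => h.
  have := cvgM (cvg_cst (Q`_i * b^-1 ^+ i)) h; rewrite mulr1; apply; exact: _.
rewrite -horner_coef in cu.
have [N _ hN] := @cvgr_gt R nat \oo _ _ _ cu 0 Qp.
exists (N + L)%N => n hn.
have [k nE] : exists k, n = (k + L)%N by exists (n - L)%N; lia.
subst n; have hk : (N <= k)%N by lia.
have := hN k hk => /= hT.
have -> : \sum_(i < (k + L).+1) Q`_i * (b ^+ (k + L - i) * G (k + L - i)%N) =
    b ^+ (k + L) * G (k + L)%N * \sum_(i < L) u i k.
  rewrite mulr_sumr [RHS](big_ord_widen (k + L).+1 (fun i => b ^+ (k + L) * G (k + L)%N * u i k)); last by lia.
  rewrite [RHS]big_mkcond /=; apply: eq_bigr => i _.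
  case: ifP => iL; last first.
    by rewrite nth_default ?mul0r //; rewrite leqNgt iL.
  rewrite /u.
  have e1 : (k + (L - i) + i = k + L)%N by lia.
  have e2 : (k + (L - i) = k + L - i)%N by lia.
  rewrite e1 e2.
  have Gn0 : G (k + L)%N != 0 by rewrite lt0r_neq0.
  have bi : b ^+ (k + L - i) = b ^+ (k + L) * b^-1 ^+ i.
    by rewrite exprVn exprB ?unitfE ?lt0r_neq0 //; lia.
  rewrite bi; field; rewrite Gn0.
  done.
by rewrite mulr_gt0 // mulr_gt0 // exprn_gt0.
Qed.

End Asym.

Local Close Scope classical_set_scope.

Section Chain.
Variable R : realType.

Lemma chain (b : R) (gs : seq R) : 0 < b -> all (fun g => (0 < g) && (g <= b)) gs ->
  exists G, Good G /\ forall n,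
    conv ((1 - b%:P * 'X) * \prod_(g <- gs) (1 - g%:P * 'X)) (fun k => b ^+ k * G k) n
    = delta n.
Proof.
move=> b0; elim: gs => [|g gs IH].
  move=> _; exists (fun=> 1); split.
    split=> // ; have E : (fun n : nat => 1 : R) =1 (fun n : nat => 1 / 1) by move=> n; rewrite divr1.
    by rewrite -(eq_cvg _ _ E); apply: cvg_cst.
  rewrite big_nil mulr1; case=> [|n]; first by rewrite conv_lin0 expr0 mulr1.
  by rewrite conv_linS !mulr1 exprS subrr.
move=> /= /andP [/andP [g0 gb] /IH [G [gG hG]]].
exists (Hs G (g / b)); split.
  apply: Hs_good => //; apply/andP; split; [by rewrite divr_ge0 // ltW | by rewrite ler_pdivrMr // mul1r].
move=> n; rewrite big_cons mulrCA mulrC conv_mul -(hG n) mulrC.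
apply: conv_ext => k; case: k => [|k]; first by rewrite conv_lin0.
have bn : b != 0 by rewrite lt0r_neq0.
rewrite conv_linS /= exprS.
have -> : b * b ^+ k * (G k.+1 + g / b * Hs G (g / b) k) =
  b * b ^+ k * G k.+1 + (b / b) * g * (b ^+ k * Hs G (g / b) k) by ring.
by rewrite divff // mul1r addrK.
Qed.

End Chain.

Unset Implicit Arguments. Set Strict Implicit.

Lemma mem_flatten_nseq (T : eqType) n (s : seq T) x :
  x \in flatten (nseq n s) -> x \in s.
Proof. by elim: n => [|n IH] //=; rewrite mem_cat => /orP [|/IH]. Qed.

Lemma prod_flatten_nseq (S : comNzRingType) (I : Type) n (s : seq I) (F : I -> S) :
  \prod_(g <- flatten (nseq n s)) F g = (\prod_(g <- s) F g) ^+ n.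
Proof. by elim: n => [|n IH]; rewrite ?big_nil ?expr0 //= big_cat IH exprS. Qed.

Lemma part_b (R : realType) (xi : seq nat) (m mu : nat) : (2 <= m)%N ->
  all (fun k => (0 < k <= m)%N) xi -> (count_mem m xi <= mu %/ m)%N ->
  exists N, forall r, (N <= r)%N -> 0 < F_coef xi m mu r.
Proof.
move=> m2 hxi ht.
set t := count_mem m xi; set e := (mu %/ m)%N; set s := (e.+1 - t)%N.
have s1 : (0 < s)%N by rewrite /s; lia.
set xi' := [seq k <- xi | k != m].
set q := p (m - mu %% m - 1) * Defs.p_part xi'.
set M := m./2.
set Ga := [seq gam R m k | k <- iota 1 M].
set b := gam R m 1.
have M1 : (0 < M)%N by rewrite /M; move: m2; clear; case: m => [|[|m]].
have hGa : forall g, g \in Ga -> 0 < g /\ g <= b.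
  move=> g /mapP [k]; rewrite mem_iota => /andP [k1 kM] ->.
  have k2 : (k.*2 <= m)%N.
    apply: (@leq_trans (m./2).*2); first by rewrite leq_double; rewrite /M in kM; lia.
    by rewrite -{2}(odd_double_half m) leq_addl.
  by split; [apply: gam_pos | apply: gam_le].
have b0 : 0 < b by apply: gam_pos.
have bin : b \in Ga by apply: map_f; rewrite mem_iota; lia.
set gs := rem b Ga ++ flatten (nseq s.-1 Ga).
have hgs : all (fun g => (0 < g) && (g <= b)) gs.
  apply/allP => g; rewrite mem_cat => /orP [/mem_rem|/mem_flatten_nseq] /hGa [-> ->] //.
have hprod : (1 - b%:P * 'X) * \prod_(g <- gs) (1 - g%:P * 'X) = Pr R m ^+ s.
  have hr : \prod_(g <- Ga) (1 - g%:P * 'X) =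
      (1 - b%:P * 'X) * \prod_(g <- rem b Ga) (1 - g%:P * 'X).
    by rewrite (big_rem b bin).
  rewrite big_cat mulrA -hr prod_flatten_nseq.
  rewrite /Ga big_map -Pr_factor -exprS prednK //.
have [G [gG hG]] := chain b0 hgs.
rewrite hprod in hG.
set g := fun k => b ^+ k * G k.
set Qr := map_poly (intr : int -> R) q.
have hQr : Qr = Pr R (m - mu %% m - 1) * \prod_(k <- xi') Pr R k.
  by rewrite /Qr /q rmorphM /= /Defs.p_part rmorph_prod.
have hF : forall r, (F_coef xi m mu r)%:~R = conv Qr g r.
  apply: (@conv_uniq _ (map_poly (intr : int -> R) (p m ^+ e.+1))).
    by rewrite coef_map /= coef0_pow ?p_coef0.
  move=> n; rewrite conv_map /F_coef fps_conv ?coef0_pow ?p_coef0 //.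
  rewrite rmorphXn /= -/(Pr R m).
  have -> : e.+1 = (t + s)%N by rewrite /s; lia.
  rewrite exprD conv_mul.
  have E : conv (Pr R m ^+ s) (conv Qr g) =1 (fun k => Qr`_k).
    move=> k; rewrite -conv_mul mulrC conv_mul.
    rewrite (@conv_ext _ Qr _ delta k); first by rewrite conv_delta.
    by move=> j; rewrite hG.
  rewrite (@conv_ext _ _ _ _ n E) conv_coef -coef_map.
  suff -> : Pr R m ^+ t * Qr = map_poly (intr : int -> R) (p (m - mu %% m - 1) * Defs.p_part xi) by [].
  rewrite (p_part_split xi m) -/t -/xi' /Qr /q !rmorphM rmorphXn /= /Pr; ring.
have Qpos : 0 < Qr.[b^-1].
  rewrite hQr hornerM horner_prod mulr_gt0 //.
    apply: Pr_pos => //; lia.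
  rewrite big_seq; apply: prodr_gt0 => k; rewrite mem_filter => /andP [km kxi].
  have := allP hxi k kxi => /andP [_ kle].
  by apply: Pr_pos => //; rewrite ltn_neqAle km kle.
have [N hN] := eventually_pos gG b0 Qpos.
by exists N => r hr; rewrite -(ltr0z R) hF; apply: hN.
Qed.


From mathcomp Require Import Rstruct.

Theorem theorem1p1 (m : nat) (xi : seq nat) (mu : nat) :
  (1 <= m)%N ->
  sorted geq xi ->
  all (fun k => (0 < k <= m)%N) xi ->
  (m = 1%N -> forall r : nat, F_coef xi m mu r = (r == 0%N)%:R) /\
  ((2 <= m)%N ->
     ((mu %/ m < count_mem m xi)%N ->
        exists N : nat, forall r : nat, (N <= r)%N -> F_coef xi m mu r = 0) /\
     ((count_mem m xi <= mu %/ m)%N ->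
        exists N : nat, forall r : nat, (N <= r)%N -> 0 < F_coef xi m mu r)).
Proof.
move=> m1 _ hxi; split.
  by move=> em; subst m; apply: part_1.
move=> m2; split; first exact: part_a.
exact: (@part_b Rdefinitions.R).
Qed.
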